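(* Let $G$ be an oriented graph derived from a Burling tree $T$ and let $uv$ be a top arc of $G$ with respect to $T$ such that $u$ is a source of $G$. Let $G'$ be obtained from $G$ by top-subdividing $uv$ (removing the arc $uv$ and adding a new vertex $w$ with arcs $wv$ and $wu$). Then $G'$ can be derived from a Burling tree $T'$ in such a way that, with respect to $T'$: $wv$ is a top arc of $G'$; $wu$ is a bottom arc of $G'$; every top arc of $G$ with respect to $T$ other than $uv$ is a top arc of $G'$; and every bottom arc of $G$ with respect to $T$ other than $uv$ is a bottom arc of $G'$.
   Context: Oriented graphs are finite, without loops, multiple arcs or pairs of opposite arcs. In a rooted tree $T$ with root $r$, each non-root vertex $v$ has a parent $p(v)$; children, leaves, ancestors and descendants are as usual. A branch is a sequence $v_1\dots v_k$ ($k\ge0$) with $v_i$ the parent of $v_{i+1}$; it starts at $v_1$. A Burling tree is a 4-tuple $(T,r,\ell,c)$: $T$ a rooted tree with root $r$; $\ell$ assigns to each non-leaf vertex $v$ one of its children $\ell(v)$ (the last-born of $v$); $c$ assigns to every vertex $v$ that is neither the root nor a last-born the vertex-set of a (possibly empty) branch starting at $\ell(p(v))$, and $c(v)=\emptyset$ if $v$ is the root or a last-born. The oriented graph fully derived from it has vertex-set $V(T)$ and an arc $uv$ iff $v\in c(u)$; an oriented graph is derived from the Burling tree if it is an induced subgraph of the fully derived one. If $G$ is derived from $T$ and $uv$ is an arc of $G$, then all out-neighbors of $u$ lie on one branch of $T$; $uv$ is a top arc with respect to $T$ if $v$ is the out-neighbor of $u$ closest in $T$ to the root, and a bottom arc with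 respect to $T$ if $v$ is the out-neighbor of $u$ furthest in $T$ from the root. *)

(* Defs.v *)
From mathcomp Require Import all_boot.
Set Implicit Arguments.
Unset Strict Implicit.
Unset Printing Implicit Defensive.

Record burling_tree (B : finType) := BurlingTree {
  bt_root : B;
  bt_par  : B -> option B;      (* parent; None exactly at the root *)
  bt_last : B -> option B;      (* last-born child; None exactly at leaves *)
  bt_c    : B -> {set B}
}.

Section Burling.
Variables (B : finType) (T : burling_tree B).

Definition piter (n : nat) (x : B) : option B :=
  iter n (fun o => obind (bt_par T) o) (Some x).

Definition depth_is (x : B) (n : nat) : Prop := piter n x = Some (bt_root T).

Definition is_last_born (x : B) : Prop := exists v, bt_last T v = Some x.

Definition branch_set_from (s : B) (S : {set B}) : Prop :=
  S = set0 \/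
  exists p : seq B,
    path (fun a b => bt_par T b == Some a) s p /\ S = [set x in s :: p].

Definition is_burling_tree : Prop :=
  [/\ [/\ bt_par T (bt_root T) = None,
      (forall v, v <> bt_root T -> bt_par T v <> None) &
      (forall v, exists n, depth_is v n)],
      (forall v, match bt_last T v with
                 | Some l => bt_par T l = Some v
                 | None => forall x, bt_par T x <> Some v
                 end),
      (forall v, (v = bt_root T \/ is_last_born v) -> bt_c T v = set0) &
      (forall v p l, bt_par T v = Some p -> bt_last T p = Some l -> l <> v ->
         branch_set_from l (bt_c T v))].

End Burling.

Definition oriented (V : finType) (a : rel V) : Prop :=
  (forall x, ~~ a x x) /\ (forall x y, a x y -> ~~ a y x).

(* (V, a) is derived from T via the embedding f: it is isomorphic (via f) to
   the induced subgraph of the fully derived graph on f(V). *)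
Definition derived_via (B V : finType) (T : burling_tree B) (a : rel V)
    (f : V -> B) : Prop :=
  injective f /\ forall x y, a x y = (f y \in bt_c T (f x)).

Definition top_arc (B V : finType) (T : burling_tree B) (a : rel V)
    (f : V -> B) (x y : V) : Prop :=
  a x y /\ forall z n m, a x z -> depth_is T (f y) n -> depth_is T (f z) m -> n <= m.

Definition bottom_arc (B V : finType) (T : burling_tree B) (a : rel V)
    (f : V -> B) (x y : V) : Prop :=
  a x y /\ forall z n m, a x z -> depth_is T (f y) n -> depth_is T (f z) m -> m <= n.

Definition is_source (V : finType) (a : rel V) (u : V) : Prop :=
  forall x, ~~ a x u.

(* Top-subdivision of the arc u v: vertex set option V, new vertex w = None;
   remove uv, add arcs w v and w u. *)
Definition top_subdivide (V : finType) (a : rel V) (u v : V) : rel (option V) :=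
  fun x y =>
    match x, y with
    | Some x', Some y' => a x' y' && ~~ ((x' == u) && (y' == v))
    | None, Some y' => (y' == v) || (y' == u)
    | _, None => false
    end.

(* Main.v *)
Require Import Defs.
From mathcomp Require Import all_boot.
Set Implicit Arguments.
Unset Strict Implicit.
Unset Printing Implicit Defensive.

Fixpoint dtail {A : Type} (s : A) (q : seq A) : seq (A * option bool) :=
  match q with
  | [::] => [::]
  | x :: q' => (s, Some false) :: (x, None) :: dtail x q'
  end.

Lemma mem_dtail_None (A : eqType) (s : A) q y :
  ((y, None) \in dtail s q) = (y \in q).
Proof. by elim: q s => [|x q IH] s //=; rewrite !inE IH !xpair_eqE ?andbF ?eqxx ?andbT. Qed.

Lemma mem_dtail_St (A : eqType) (s : A) q y :
  ((y, Some true) \in dtail s q) = false.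
Proof. by elim: q s => [|x q IH] s //=; rewrite !inE IH !xpair_eqE ?andbF ?eqxx ?andbT. Qed.

Lemma last_dtail (A : Type) (s : A) q :
  last (s, None) (dtail s q) = (last s q, None).
Proof. by elim: q s => [|x q IH] s //=. Qed.

Section Gen.
Variables (B : finType) (T : burling_tree B).

Lemma piter_None n : iter n (fun o => obind (bt_par T) o) None = None.
Proof. by elim: n => //= n ->. Qed.

Lemma piterD n m x : piter T (n + m) x = obind (piter T n) (piter T m x).
Proof.
rewrite /piter iterD; case: (iter m _ _) => [y|] //=; exact: piter_None.
Qed.

Lemma piter1 x : piter T 1 x = bt_par T x.
Proof. by []. Qed.

Lemma depth_uniq x n m : bt_par T (bt_root T) = None ->
  depth_is T x n -> depth_is T x m -> n = m.
Proof.
move=> Hr.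
wlog le: n m / n <= m => [H|].
  by case/orP: (leq_total n m) => le Hn Hm; [|symmetry]; apply: H.
rewrite /depth_is => Hn; rewrite -(subnK le) piterD Hn /=.
case E: (m - n) => [|k] //.
by rewrite -addn1 piterD piter1 Hr.
Qed.

Lemma depth_par x y n : bt_par T y = Some x -> depth_is T x n ->
  depth_is T y n.+1.
Proof. by move=> Hy Hx; rewrite /depth_is -addn1 piterD piter1 Hy. Qed.

End Gen.

Section Gen2.
Variables (B : finType) (T : burling_tree B).

Definition st (x : B) : B := odflt x (obind (bt_last T) (bt_par T x)).

Definition B' : finType := Finite.clone (B * option bool)%type _.

Definition dpar (y : B') : option B' :=
  match y with
  | (x, None) => omap (fun p => (p, Some false)) (bt_par T x)
  | (x, Some _) => Some (x, None)
  end.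

Definition dlast (y : B') : option B' :=
  match y with
  | (x, None) => Some (x, Some false)
  | (x, Some false) => omap (fun l => (l, None)) (bt_last T x)
  | (x, Some true) => None
  end.

Definition dc (Q : B -> seq B) (fv P : B) (U W : {set B'}) (y : B') : {set B'} :=
  match y with
  | (x, None) => if bt_c T x == set0 then set0
                 else [set z : B' in (st x, None) :: dtail (st x) (Q x)]
  | (x, Some false) => set0
  | (x, Some true) => if x == fv then U else if x == P then W else set0
  end.

Definition dtree Q fv P U W : burling_tree B' :=
  BurlingTree (bt_root T, None) dpar dlast (dc Q fv P U W).

Variables (Q : B -> seq B) (fv P : B) (U W : {set B'}).
Let T' := dtree Q fv P U W.

Lemma piter_even n x :
  piter T' n.*2 (x, None) = omap (fun y => (y, None)) (piter T n x).
Proof.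
elim: n => [|n IH] //.
rewrite doubleS.
change (piter T' n.*2.+2 (x, None)) with
  (obind dpar (obind dpar (piter T' n.*2 (x, None)))).
rewrite IH.
change (piter T n.+1 x) with (obind (bt_par T) (piter T n x)).
case: (piter T n x) => //= y.
by case: (bt_par T y).
Qed.

Lemma depth_None x n : depth_is T x n -> depth_is T' (x, None) n.*2.
Proof. by rewrite /depth_is piter_even => ->. Qed.

Lemma depth_Some x b n : depth_is T x n -> depth_is T' (x, Some b) n.*2.+1.
Proof.
move=> H; rewrite /depth_is -addn1 piterD piter1 /=.
exact: depth_None.
Qed.

Lemma dtail_path s q :
  path (fun a b => bt_par T b == Some a) s q ->
  path (fun a b => bt_par T' b == Some a) (s, None) (dtail s q).
Proof.
elim: q s => [|x q IH] s //= /andP [/eqP Hx Hq].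
by rewrite /= Hx !eqxx IH.
Qed.

End Gen2.

Theorem lemma3p7 (B : finType) (T : burling_tree B) (V : finType) (a : rel V)
    (f : V -> B) (u v : V) :
  is_burling_tree T ->
  oriented a ->
  derived_via T a f ->
  top_arc T a f u v ->
  is_source a u ->
  exists (B' : finType) (T' : burling_tree B') (f' : option V -> B'),
    [/\ is_burling_tree T',
        derived_via T' (top_subdivide a u v) f',
        top_arc T' (top_subdivide a u v) f' None (Some v),
        bottom_arc T' (top_subdivide a u v) f' None (Some u) &
        (forall x y, (x, y) <> (u, v) -> top_arc T a f x y ->
           top_arc T' (top_subdivide a u v) f' (Some x) (Some y)) /\
        (forall x y, (x, y) <> (u, v) -> bottom_arc T a f x y ->
           bottom_arc T' (top_subdivide a u v) f' (Some x) (Some y))].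
Proof.
move=> [[Hroot Hnr Hdep] Hlast Hc0 Hbr] _ [finj Hf] [Huv Htop] Hsrc.
have [dep Hd] := fin_all_exists Hdep.
have depE : forall x n, depth_is T x n -> n = dep x.
  by move=> x n H; exact: depth_uniq Hroot H (Hd x).
have depP : forall x y, bt_par T y = Some x -> dep y = (dep x).+1.
  by move=> x y H; symmetry; apply: depE; apply: depth_par H (Hd x).
pose R := fun a b => bt_par T b == Some a.
have HQ : forall x, exists q, bt_c T x != set0 ->
    path R (st T x) q /\ bt_c T x = [set z in st T x :: q].
  move=> x; case: (eqVneq (bt_c T x) set0) => [->|Hne]; first by exists [::].
  have Hxr : x <> bt_root T by move=> E; move/eqP: Hne; apply; apply: Hc0; left.
  case Ep: (bt_par T x) => [p|]; last by have := Hnr x Hxr; rewrite Ep.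
  have := Hlast p; case El: (bt_last T p) => [l|] Hl; last by have := Hl x; rewrite Ep.
  have Hlx : l <> x.
    by move=> E; subst l; move/eqP: Hne; apply; apply: Hc0; right; exists p.
  case: (Hbr x p l Ep El Hlx) => [E|[q [Hq E]]]; first by rewrite E eqxx in Hne.
  by exists q => _; rewrite /st Ep /= El.
have [Q HQx] := fin_all_exists HQ.
have Hfv : f v \in bt_c T (f u) by rewrite -Hf.
have Hcu : bt_c T (f u) != set0 by apply/set0Pn; exists (f v).
have [Hpath Hcset] := HQx (f u) Hcu.
have Hur : f u <> bt_root T by move=> E; move: Hfv; rewrite Hc0 ?inE //; left.
case EP: (bt_par T (f u)) => [P|]; last by have := Hnr _ Hur; rewrite EP.
have := Hlast P; case El: (bt_last T P) => [b1|] Hb1; last by have := Hb1 (f u); rewrite EP.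
have Hst : st T (f u) = b1 by rewrite /st EP /= El.
rewrite Hst in Hpath Hcset.
have HpathP : path R P (b1 :: Q (f u)) by rewrite /= Hpath andbT /R Hb1 eqxx.
have Hin : f v \in b1 :: Q (f u) by rewrite Hcset inE in Hfv.
move: (b1 :: Q (f u)) HpathP Hcset Hin => L HpathP Hcset Hin.
case/splitPr: Hin HpathP Hcset => r1 r2 HpathP Hcset.
have Hlt : forall a b, R a b -> dep a < dep b by move=> a0 b0 /eqP /depP ->.
have Hsort : path (relpre dep ltn) P (r1 ++ f v :: r2).
  by apply: sub_path HpathP => a0 b0 /Hlt.
have Htr : transitive (relpre dep ltn) by move=> b0 a0 c0; apply: ltn_trans.
have [HPa Hr1 Hr2] : [/\ all (fun y => dep P < dep y) (r1 ++ f v :: r2),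
    allrel (relpre dep ltn) r1 (f v :: r2) &
    all (fun y => dep (f v) < dep y) r2].
  move: Hsort; rewrite path_sortedE // sorted_pairwise // pairwise_cat pairwise_cons.
  by case/andP=> H1 /and3P[H2 _ /andP[H3 _]]; split; [exact: H1|exact: H2|exact: H3].
have HPfv : dep P < dep (f v) by move/allP: HPa; apply; rewrite mem_cat inE eqxx orbT.
have HPv : P != f v by apply/eqP => E; rewrite E ltnn in HPfv.
have Hfvr2 : f v \notin r2 by apply/negP => /(allP Hr2); rewrite ltnn.
have Hr1' : forall y, f y \in r1 -> False.
  move=> y Hy; have Hay : a u y by rewrite Hf Hcset inE mem_cat Hy.
  have := Htop y _ _ Hay (Hd _) (Hd _).
  have := allrelP Hr1 _ _ Hy (mem_head _ _) => /= H1 H2.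
  by have := leq_trans H1 H2; rewrite ltnn.
have Hauu : a u u = false by apply/negbTE/Hsrc.
have Huv' : u != v by apply/eqP => E; rewrite -E Hauu in Huv.
pose f' := fun o : option V => match o with
  | None => ((P, Some true) : B' B)
  | Some x => if x == u then ((f v, Some true) : B' B) else (f x, None) end.
pose U := [set z : B' B in dtail (f v) r2].
pose W := [set z : B' B in rcons (dtail P (r1 ++ [:: f v])) (f v, Some true)].
pose T' := dtree T Q (f v) P U W.
exists (B' B), T', f'.
have HrootT' : bt_par T' (bt_root T') = None by rewrite /= Hroot.
have depN : forall x n, depth_is T' (x, None) n -> n = (dep x).*2.
  by move=> x n H; apply: depth_uniq HrootT' H _; apply: depth_None.
have depS : forall x b n, depth_is T' (x, Some b) n -> n = (dep x).*2.+1.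
  by move=> x b n H; apply: depth_uniq HrootT' H _; apply: depth_Some.
have Hvu : v != u by rewrite eq_sym.
have Hp2 : path R (f v) r2.
  by move: HpathP; rewrite cat_path => /andP[_ /= /andP[]].
have Hp1 : path R P (r1 ++ [:: f v]).
  move: HpathP; rewrite !cat_path => /andP[-> /=].
  by case/andP=> ->.
split.
-
  split.
  + split.
    * by rewrite /= Hroot.
    * move=> [x [b|]] //= Hne.
      have Hx : x <> bt_root T by move=> E; apply: Hne; rewrite E.
      by case: (bt_par T x) (Hnr x Hx).
    * move=> [x [b|]].
      - by exists (dep x).*2.+1; apply: depth_Some; exact: Hd.
      - by exists (dep x).*2; apply: depth_None; exact: Hd.
  + move=> [x [[|]|]] /=.
    * by move=> [y [b|]] //=; case: (bt_par T y).
    * case Elx: (bt_last T x) (Hlast x) => [l|] H /=; first by rewrite H.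
      move=> [y [b|]] //=.
      case Ep: (bt_par T y) => [p|] //= E.
      case: E => E; subst p; exact: H y Ep.
    * by [].
  + move=> [x b] /= [E|[[y b'] Ey]].
    * case: E => -> ->.
      by rewrite /= Hc0 ?eqxx //; left.
    * case: b' Ey => [[|]|] //=.
      - case Ely: (bt_last T y) => [l|] //= [E1 E2]; subst x b.
        by rewrite /= Hc0 ?eqxx //; right; exists y.
      - by case=> E1 E2; subst.
  + move=> [x [[|]|]] p' l' /=.
    * move=> [<-] [<-] _ /=.
      case: eqP => [->|_].
      - case E2: r2 Hp2 => [|y2 r2'] Hp2'.
          left; rewrite /U E2; apply/setP => z; by rewrite !inE.
        right; exists ((y2, None) :: dtail y2 r2').
        have := dtail_path Q (f v) P U W Hp2'.
        move=> /= /andP[_ H]; split; first exact: H.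
        by rewrite /U E2.
      case: eqP => [->|_]; last by left.
      have HW := dtail_path Q (f v) P U W Hp1.
      have HW2 : path (fun a0 b0 => bt_par T' b0 == Some a0) (P, None)
          (rcons (dtail P (r1 ++ [:: f v])) (f v, Some true)).
        by rewrite rcons_path HW last_dtail cats1 last_rcons /= eqxx.
      case E1: (r1 ++ [:: f v]) HW2 => [|y1 r1'] HW2; first by move: E1; case: (r1).
      right; exists (rcons ((y1, None) :: dtail y1 r1') (f v, Some true)).
      move: HW2 => /= /andP[_ H]; split; first exact: H.
      by rewrite /W E1.
    * by move=> [<-] [<-] H.
    * case Ep: (bt_par T x) => [p|] //= [<-] /=.
      case Elq: (bt_last T p) => [l|] //= [<-] Hlx.
      case: eqP => [_|Hne]; first by left.
      have [Hq Hc] := HQx x (introN eqP Hne).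
      have Hst' : st T x = l by rewrite /st Ep /= Elq.
      rewrite Hst' in Hq *.
      right; exists (dtail l (Q x)); split => //.
      exact: dtail_path.
-
  split.
  + move=> [x|] [y|]; rewrite /f' /=.
    * case: (eqVneq x u) => [->|Hx]; case: (eqVneq y u) => [->|Hy] //; try by case.
      by case=> /finj ->.
    * case: (eqVneq x u) => [->|Hx]; last by case.
      by case=> E; rewrite E eqxx in HPv.
    * case: (eqVneq y u) => [->|Hy]; last by case.
      by case=> E; rewrite E eqxx in HPv.
    * by [].
  + move=> [x|] [y|]; rewrite /f' /=.
    * case: (eqVneq x u) => [->|Hx].
      - rewrite ?eqxx /=. rewrite (eqxx (f v)).
        case: (eqVneq y u) => [->|Hy].
          by rewrite Hauu /U inE mem_dtail_St.
        rewrite /U inE mem_dtail_None Hf Hcset inE mem_cat.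
        case: (boolP (f y \in r1)) => [/Hr1' []|_] /=.
        rewrite inE (inj_eq finj).
        case: eqVneq => [->|_] /=; first by rewrite (negbTE Hfvr2).
        by rewrite andbT.
      - rewrite /= andbT.
        case: (eqVneq y u) => [->|Hy].
          rewrite (negbTE (Hsrc x)).
          case: ifP => _; first by rewrite in_set0.
          by rewrite !inE mem_dtail_St xpair_eqE andbF.
        rewrite Hf.
        case: (eqVneq (bt_c T (f x)) set0) => [->|Hne] /=; first by rewrite !in_set0.
        have [_ Hc] := HQx _ Hne.
        by rewrite Hc !inE mem_dtail_None xpair_eqE eqxx andbT.
    * case: (eqVneq x u) => [_|Hx].
      - by rewrite /= (eqxx (f v)) /U inE mem_dtail_St.
      - rewrite /=.
        case: ifP => _; first by rewrite in_set0.
        by rewrite !inE mem_dtail_St xpair_eqE andbF.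
    * rewrite (negbTE HPv) eqxx /W.
      case: (eqVneq y u) => [->|Hy].
        by rewrite orbT inE mem_rcons mem_head.
      rewrite orbF inE mem_rcons inE xpair_eqE andbF /=.
      rewrite mem_dtail_None mem_cat inE (inj_eq finj).
      by case: (boolP (f y \in r1)) => [/Hr1' []|_].
    * rewrite (negbTE HPv) eqxx /W inE mem_rcons inE mem_dtail_St xpair_eqE.
      by rewrite (negbTE HPv).
-
  split; first by rewrite /= eqxx.
  move=> [z|] n m //.
  rewrite /f' /= (negbTE Hvu).
  case: (eqVneq z u) => [->|Hzu] Hz /depN ->.
  + by rewrite ?eqxx => /depS ->.
  + by move: Hz; rewrite orbF => /eqP -> /depN ->.
-
  split; first by rewrite /= eqxx orbT.
  move=> [z|] n m //.
  rewrite /f' /= eqxx.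
  move=> Hz /depS ->.
  case: (eqVneq z u) => [_|Hzu].
  + by move=> /= /depS ->.
  + move: Hz; rewrite (negbTE Hzu) orbF => /eqP -> /=.
    by move=> /depN ->.
- split=> x y Hxy [Haxy Ht].
  + have Hyu : y != u by apply: (contraTneq _ Haxy) => ->; exact: Hsrc.
    split.
      rewrite /= Haxy /=; apply/negP => /andP[/eqP Ex /eqP Ey].
      by apply: Hxy; rewrite Ex Ey.
    move=> [z|] n m //= /andP[Haxz _].
    have Hzu : z != u by apply: (contraTneq _ Haxz) => ->; exact: Hsrc.
    rewrite /f' (negbTE Hyu) (negbTE Hzu) => /depN -> /depN ->.
    rewrite leq_double; exact: Ht z _ _ Haxz (Hd _) (Hd _).
  + have Hyu : y != u by apply: (contraTneq _ Haxy) => ->; exact: Hsrc.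
    split.
      rewrite /= Haxy /=; apply/negP => /andP[/eqP Ex /eqP Ey].
      by apply: Hxy; rewrite Ex Ey.
    move=> [z|] n m //= /andP[Haxz _].
    have Hzu : z != u by apply: (contraTneq _ Haxz) => ->; exact: Hsrc.
    rewrite /f' (negbTE Hyu) (negbTE Hzu) => /depN -> /depN ->.
    rewrite leq_double; exact: Ht z _ _ Haxz (Hd _) (Hd _).
Qed.
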